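(* For every Pólya frequency power series $f(t)=\sum_{k\ge1}f_kt^k$ with $f_1\neq0$, there exists a constant $\alpha>0$ such that the quasi-Riordan array $\left[\frac1{1-\alpha t},f(t)\right]$ is not totally positive, although both $\frac1{1-\alpha t}$ and $f(t)$ are Pólya frequency power series.
   Context: For formal power series $g(t)=\sum_{n\ge0}g_nt^n$ with $g_0=1$ and $f(t)=\sum_{n\ge1}f_nt^n$ with $f_1\ne0$, the quasi-Riordan array $[g,f]$ is the infinite lower triangular matrix $(r_{n,k})_{n,k\ge0}$ with $r_{n,0}=g_n$ and $r_{n,k}=f_{n-k+1}$ for $k\ge1$ (with $f_j=0$ for $j\le0$), i.e. its columns have generating functions $g,f,tf,t^2f,\dots$. An infinite matrix is totally positive (TP) if all its minors are nonnegative. A sequence $(a_n)_{n\ge0}$ of nonnegative reals is a Pólya frequency sequence if its Toeplitz matrix $[a_{i-j}]_{i,j\ge0}$ (with $a_m=0$ for $m<0$) is TP; a formal power series is a Pólya frequency power series if its coefficient sequence is a Pólya frequency sequence. *)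

(* Defs.v *)
From HB Require Import structures.
From mathcomp Require Import all_boot all_order all_algebra.
From mathcomp Require Import reals.
Set Implicit Arguments. Unset Strict Implicit. Unset Printing Implicit Defensive.
Import Order.TTheory GRing.Theory Num.Theory.
Local Open Scope ring_scope.

Definition infmx (R : Type) := nat -> nat -> R.

Definition strict_incr (k : nat) (r : 'I_k -> nat) : Prop :=
  forall a b : 'I_k, (a < b)%N -> (r a < r b)%N.

Definition totally_positive (R : realType) (M : infmx R) : Prop :=
  forall (k : nat) (r c : 'I_k -> nat),
    strict_incr r -> strict_incr c ->
    0 <= \det (\matrix_(a < k, b < k) M (r a) (c b)).

Definition toeplitz (R : realType) (a : nat -> R) : infmx R :=
  fun i j => if (j <= i)%N then a (i - j)%N else 0.

(* Polya frequency sequence (equivalently, PF power series, identified with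
   its coefficient sequence). *)
Definition PF_seq (R : realType) (a : nat -> R) : Prop :=
  (forall n, 0 <= a n) /\ totally_positive (toeplitz a).

(* Quasi-Riordan array [g, f]: r_{n,0} = g_n, r_{n,k} = f_{n-k+1} for k >= 1,
   with f_j = 0 for j <= 0 (here f 0 = 0 is assumed of f). *)
Definition quasi_riordan (R : realType) (g f : nat -> R) : infmx R :=
  fun n k => if k == 0%N then g n
             else if (k <= n.+1)%N then f (n.+1 - k)%N else 0.

(* Main.v *)
Require Import Defs.
From HB Require Import structures.
From mathcomp Require Import all_boot all_order all_algebra.
From mathcomp Require Import reals.
From mathcomp Require Import ring lra zify.
Import Order.TTheory GRing.Theory Num.Theory.
Local Open Scope ring_scope.

Lemma geo_det (R : realType) (alpha : R) (ha : 0 < alpha) (k : nat) :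
  forall r c : nat -> nat,
  (forall a b, (a < b < k)%N -> (r a < r b)%N) ->
  (forall a b, (a < b < k)%N -> (c a < c b)%N) ->
  0 <= \det (\matrix_(a < k, b < k) toeplitz (fun n => alpha ^+ n) (r a) (c b)).
Proof.
elim: k => [|k IH] r c hr hc; first by rewrite det_mx00.
set A := \matrix_(a < k.+1, b < k.+1) _.
have c0le : forall b : 'I_k.+1, (c 0 <= c b)%N.
  move=> b; case: (posnP b) => [->|bp]; first by [].
  by apply: ltnW; apply: hc; rewrite bp ltn_ord.
have r0le : forall a : 'I_k.+1, (r 0 <= r a)%N.
  move=> b; case: (posnP b) => [->|bp]; first by [].
  by apply: ltnW; apply: hr; rewrite bp ltn_ord.
case: (ltnP (r 0) (c 0)) => h0.
  rewrite (expand_det_row A ord0) big1 // => j _.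
  rewrite !mxE /toeplitz ifF ?mul0r //.
  by apply/negbTE; rewrite -ltnNge; apply: leq_trans h0 (c0le j).
case: (boolP [forall j : 'I_k.+1, (0 < j)%N ==> (r 0 < c j)%N]) => hall.
  rewrite (expand_det_row A ord0) big_ord_recl big1 ?addr0; last first.
    move=> j _; rewrite !mxE /toeplitz ifF ?mul0r //.
    apply/negbTE; rewrite -ltnNge.
    by move: (forallP hall (lift ord0 j)) => /implyP; apply.
  rewrite /cofactor expr0 mul1r.
  have -> : row' ord0 (col' ord0 A) =
    \matrix_(a < k, b < k) toeplitz (fun n => alpha ^+ n) (r a.+1) (c b.+1).
    by apply/matrixP => a b; rewrite !mxE.
  apply: mulr_ge0.
    by rewrite mxE /toeplitz /=; case: ifP => _ //; rewrite exprn_ge0 // ltW.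
  apply: (IH (fun a => r a.+1) (fun b => c b.+1)) => a b /andP [h1 h2].
    by apply: hr; rewrite ltnS h1.
  by apply: hc; rewrite ltnS h1.
have [j /andP [jp hj]] : exists j : 'I_k.+1, (0 < j)%N && (c j <= r 0)%N.
  move/forallPn: hall => [j]; rewrite negb_imply -leqNgt => hj.
  by exists j.
have c0j : (c 0 < c j)%N by apply: hc; rewrite jp ltn_ord.
pose B := \matrix_(a < k.+1, b < k.+1) A a (if b == ord0 then j else b).
pose s := alpha ^+ (c j - c 0).
pose d := \row_(b < k.+1) (if b == ord0 then s else 1).
have -> : A = B *m diag_mx d.
  rewrite mul_mx_diag; apply/matrixP => a b; rewrite !mxE.
  case: eqP => [->|_]; last by rewrite mulr1.
  rewrite /toeplitz.
  have ha0 := r0le a.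
  have e1 : (c 0 <= r a)%N by apply: leq_trans (ltnW c0j) (leq_trans hj ha0).
  have e2 : (c j <= r a)%N by apply: leq_trans hj ha0.
  rewrite e1 e2 /s -exprD; congr (_ ^+ _).
  have := ltnW c0j; change (nat_of_ord (ord0 : 'I_k.+1)) with 0%N; move=> hh; rewrite -{1}(subnK e2) -addnBA // addnC.
rewrite det_mulmx.
have -> : \det B = 0.
  rewrite -det_tr (@determinant_alternate _ _ _ ord0 j).
  - by [].
  - by rewrite -val_eqE /= eq_sym -lt0n.
  by move=> b; rewrite !mxE; case: ifP.
by rewrite mul0r.
Qed.

Theorem corollary4p3 (R : realType) (f : nat -> R) :
  f 0%N = 0 -> f 1%N != 0 -> PF_seq f ->
  exists alpha : R, 0 < alpha /\
    ~ totally_positive (quasi_riordan (fun n => alpha ^+ n) f) /\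
    PF_seq (fun n => alpha ^+ n) /\ PF_seq f.
Proof.
move=> f0 f1 [fpos ftp].
have f1p : 0 < f 1%N by rewrite lt0r f1 fpos.
have f2p := fpos 2%N.
pose alpha := f 2%N / f 1%N + 1.
have hq : 0 <= f 2%N / f 1%N by apply: divr_ge0 => //; apply: ltW.
have ap : 0 < alpha by rewrite /alpha; lra.
have af : alpha * f 1%N = f 2%N + f 1%N.
  by rewrite /alpha mulrDl divfK ?mul1r // gt_eqF.
exists alpha; split => //; split; last split => //.
  move=> tp.
  have := tp 2%N (fun a => (val a).+1) (fun b => val b).
  have H1 : strict_incr (fun a : 'I_2 => (val a).+1) by move=> a b.
  have H2 : strict_incr (fun a : 'I_2 => val a) by move=> a b.
  move=> /(_ H1 H2).
  rewrite (expand_det_row _ ord0) !big_ord_recl big_ord0 addr0 /cofactor.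
  rewrite !det_mx11 !mxE /quasi_riordan /bump /=.
  rewrite !expr0 !expr1 mul1r mulN1r => h.
  have e : f 1%N * - alpha ^+ 2 = - alpha * (f 2%N + f 1%N).
    by rewrite -af expr2; ring.
  rewrite e in h.
  nra.
split; first by move=> n; rewrite exprn_ge0 // ltW.
move=> k r c hr hc.
case: k r c hr hc => [|k] r c hr hc; first by rewrite det_mx00.
have -> : \matrix_(a < k.+1, b < k.+1) toeplitz (fun n => alpha ^+ n) (r a) (c b)
  = \matrix_(a < k.+1, b < k.+1) toeplitz (fun n => alpha ^+ n) (r (inord a)) (c (inord b)).
  by apply/matrixP => a b; rewrite !mxE !inord_val.
have H := @geo_det R alpha ap k.+1 (fun n => r (inord n)) (fun n => c (inord n)).
apply: H => a b /andP [h1 h2].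
  by apply: hr; rewrite /= !inordK // (ltn_trans h1).
by apply: hc; rewrite /= !inordK // (ltn_trans h1).
Qed.
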